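(* For every integer $q>1$ and every integer $n$, $$\left\lceil\frac{n}{q}\right\rceil=\sum_{i=0}^{q-1}\left\lceil\frac{n-i-\sum_{j=1}^{q-1}\left\lceil\frac{n-j}{q}\right\rceil}{q}\right\rceil,$$ i.e. $\lceil n/q\rceil$ formally satisfies the recursion $R(n)=\sum_{i=0}^{q-1}R\big(n-i-\sum_{j=1}^{q-1}R(n-j)\big)$. *)

(* Defs.v *)
From Stdlib Require Import ZArith List.
Open Scope Z_scope.

(* Ceiling of the rational number n/q, for q > 0:
   ceil(n/q) = - floor((-n)/q), with Z.div the floor division for q > 0. *)
Definition ceil_div (n q : Z) : Z := - ((- n) / q).

(* Sum over an integer range: zsum a b f = f a + f (a+1) + ... + f b (0 if b < a). *)
Definition zsum (a b : Z) (f : Z -> Z) : Z :=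
  fold_right Z.add 0 (map (fun k => f (a + Z.of_nat k)) (seq 0 (Z.to_nat (b - a + 1)))).

(* Main.v *)
Require Import Defs.
From Stdlib Require Import ZArith List Lia.
Open Scope Z_scope.

Lemma fr_init (l : list Z) (x : Z) : fold_right Z.add x l = x + fold_right Z.add 0 l.
Proof. induction l; simpl; lia. Qed.

Lemma term (q m : Z) (k : Z) (hq : 0 < q) (hk : 0 <= k < q) :
  ceil_div (m - k) q = m / q + (if k <? m mod q then 1 else 0).
Proof.
  unfold ceil_div.
  pose proof (Z.div_mod m q ltac:(lia)) as Hm.
  pose proof (Z.mod_pos_bound m q hq) as Hr.
  set (a := m / q) in *. set (r := m mod q) in *.
  replace (- (m - k)) with ((k - r) + (-a) * q) by lia.
  rewrite Z_div_plus_full by lia.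
  destruct (Z.ltb_spec k r).
  - assert ((k - r) / q = -1).
    { replace (k - r) with ((k - r + q) + (-1) * q) by lia.
      rewrite Z_div_plus_full by lia. rewrite Z.div_small by lia. lia. }
    lia.
  - rewrite Z.div_small by lia. lia.
Qed.

Lemma partial (q m : Z) (hq : 0 < q) (K : nat) :
  (Z.of_nat K <= q) ->
  fold_right Z.add 0 (map (fun k => ceil_div (m - (0 + Z.of_nat k)) q) (seq 0 K))
  = Z.of_nat K * (m / q) + Z.min (Z.of_nat K) (m mod q).
Proof.
  pose proof (Z.mod_pos_bound m q hq).
  induction K; intros HK.
  - simpl. lia.
  - rewrite seq_S, map_app, fold_right_app. cbn [map fold_right].
    rewrite fr_init, IHK by lia. rewrite Nat2Z.inj_succ, Z.mul_succ_l.
    rewrite ?Z.add_0_l, term by lia.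
    rewrite Nat.add_0_l; destruct (Z.ltb_spec (Z.of_nat K) (m mod q)); lia.
Qed.

Lemma hermite (q m : Z) (hq : 0 < q) :
  zsum 0 (q - 1) (fun j => ceil_div (m - j) q) = m.
Proof.
  unfold zsum.
  replace (q - 1 - 0 + 1) with q by lia.
  pose proof (Z2Nat.id q ltac:(lia)).
  rewrite partial by lia. rewrite H.
  pose proof (Z.div_mod m q ltac:(lia)).
  pose proof (Z.mod_pos_bound m q hq). lia.
Qed.

Lemma split0 (q : Z) (f : Z -> Z) (hq : 1 < q) :
  zsum 0 (q - 1) f = f 0 + zsum 1 (q - 1) f.
Proof.
  unfold zsum.
  replace (q - 1 - 0 + 1) with (Z.succ (q - 1 - 1 + 1)) by lia.
  rewrite Z2Nat.inj_succ by lia.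
  cbn [seq map fold_right]. f_equal.
  rewrite <- seq_shift, map_map. f_equal. apply map_ext. intros. f_equal. rewrite Nat2Z.inj_succ. lia.
Qed.

Theorem theorem6 (q n : Z) (hq : 1 < q) :
  ceil_div n q =
  zsum 0 (q - 1)
    (fun i => ceil_div (n - i - zsum 1 (q - 1) (fun j => ceil_div (n - j) q)) q).
Proof.
  pose proof (hermite q n ltac:(lia)) as H.
  rewrite split0 in H by lia.
  replace (n - 0) with n in H by lia.
  assert (E : zsum 1 (q - 1) (fun j => ceil_div (n - j) q) = n - ceil_div n q) by lia.
  rewrite E.
  rewrite <- (hermite q (ceil_div n q)) at 1 by lia.
  unfold zsum. f_equal. apply map_ext. intros. f_equal. lia.
Qed.
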